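(* Let $\nu>0$, $\beta$ a constant, $K$ a smooth positive function with antiderivative $J(u)=\int K(u)\,du$ assumed invertible, and $C(u)=\beta K(u)$. For arbitrary constants $c_1,c_2$ define, for $z>0$, $t>0$, $$v(z,t)=\begin{cases} t^{-(1+\nu)/2}\exp\!\left(-\frac{\beta z^2}{4t}\right)\left(c_1+c_2\frac{(z/t)^{1-\nu}}{1-\nu}\right), & \nu\neq 1,\\[4pt] t^{-1}\exp\!\left(-\frac{\beta z^2}{4t}\right)\left(c_1+c_2\ln\frac{z}{t}\right), & \nu=1.\end{cases}$$ Then $v$ solves $\beta v_t=v_{zz}+\frac{\nu}{z}v_z$, and, wherever $v$ takes values in the range of $J$, $u(z,t)=J^{-1}(v(z,t))$ solves $C(u)u_t=z^{-\nu}\left(K(u)z^{\nu}u_z\right)_z$. *)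

(* Defs.v *)
From Stdlib Require Import Reals.
From Coquelicot Require Import Coquelicot.
Open Scope R_scope.

Definition vsol (beta nu c1 c2 : R) (z t : R) : R :=
  if Req_EM_T nu 1 then
    / t * exp (- (beta * z ^ 2) / (4 * t)) * (c1 + c2 * ln (z / t))
  else
    Rpower t (- (1 + nu) / 2) * exp (- (beta * z ^ 2) / (4 * t))
      * (c1 + c2 * (Rpower (z / t) (1 - nu) / (1 - nu))).

(* Main.v *)
Require Import Defs.
From Stdlib Require Import Reals Lra Ranalysis5.
From Coquelicot Require Import Coquelicot.
Open Scope R_scope.

Lemma J_incr (K J : R -> R) (Kpos : forall x, 0 < K x)
  (HJ : forall x, is_derive J x (K x)) : forall x y, x < y -> J x < J y.
Proof.
  intros x y Hxy.
  apply (incr_function J m_infty p_infty K); simpl; auto.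
  intros; apply Kpos.
Qed.

Lemma J_cont (K J : R -> R) (HJ : forall x, is_derive J x (K x)) : continuity J.
Proof.
  intros x. apply derivable_continuous_pt.
  exists (K x). apply is_derive_Reals. apply HJ.
Qed.

Lemma J_range (K J : R -> R) (Kpos : forall x, 0 < K x)
  (HJ : forall x, is_derive J x (K x)) (w y : R) :
  J (w-1) <= y <= J (w+1) -> exists x, w-1 <= x <= w+1 /\ J x = y.
Proof.
  intros Hy.
  pose proof (J_incr K J Kpos HJ) as Hi.
  assert (H1 : J (w-1) < J (w+1)) by (apply Hi; lra).
  destruct (IVT_gen J (w-1) (w+1) y (J_cont K J HJ)) as [x [Hx Hxy]].
  - rewrite Rmin_left by lra. rewrite Rmax_right by lra. lra.
  - exists x. rewrite Rmin_left in Hx by lra. rewrite Rmax_right in Hx by lra. auto.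
Qed.

Lemma Jinv_deriv (K J Jinv : R -> R) (Kpos : forall x, 0 < K x)
  (HJ : forall x, is_derive J x (K x))
  (HJinv : forall x, Jinv (J x) = x) (w : R) :
  is_derive Jinv (J w) (/ K w).
Proof.
  pose proof (J_incr K J Kpos HJ) as Hi.
  assert (H1 : J (w-1) < J w) by (apply Hi; lra).
  assert (H2 : J w < J (w+1)) by (apply Hi; lra).
  assert (Hcomp : forall x, J (w-1) <= x -> x <= J (w+1) -> comp J Jinv x = id x).
  { intros x Ha Hb. destruct (J_range K J Kpos HJ w x) as [y [_ Hy]]; [lra|].
    unfold comp, id. rewrite <- Hy, HJinv. reflexivity. }
  assert (Hwf : forall x, J (w-1) <= x -> x <= J (w+1) -> w-1 <= Jinv x <= w+1).
  { intros x Ha Hb. destruct (J_range K J Kpos HJ w x) as [y [Hy1 Hy]]; [lra|].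
    rewrite <- Hy, HJinv. auto. }
  assert (Hc : continuity_pt Jinv (J w)).
  { apply (continuity_pt_recip_interv J Jinv (w-1) (w+1)).
    - lra.
    - intros; apply Hi; lra.
    - exact Hcomp.
    - exact Hwf.
    - intros; apply (J_cont K J HJ).
    - lra. }
  pose (Prf := fun a (_ : Jinv (J (w-1)) <= a <= Jinv (J (w+1))) =>
      exist (fun l => derivable_pt_lim J a l) (K a) (proj1 (is_derive_Reals _ _ _) (HJ a))
      : derivable_pt J a).
  assert (Pi : Jinv (J (w-1)) <= Jinv (J w) <= Jinv (J (w+1))).
  { rewrite !HJinv. lra. }
  pose proof (derivable_pt_lim_recip_interv J Jinv (J (w-1)) (J (w+1)) (J w) Prf Hc
     ltac:(lra) ltac:(lra) Pi) as D.
  apply is_derive_Reals.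
  replace (/ K w) with (1 / derive_pt J (Jinv (J w)) (Prf (Jinv (J w)) Pi)).
  - apply D.
    + intros x Hx. apply Hcomp; lra.
    + simpl. rewrite HJinv. pose proof (Kpos w). lra.
  - simpl. rewrite HJinv. field. pose proof (Kpos w). lra.
Qed.
Lemma part1_gen (beta nu : R) (F Vt Vz Vzz : R -> R -> R)
  (H : forall z t, 0 < z -> 0 < t ->
     is_derive (fun s => F z s) t (Vt z t) /\
     is_derive (fun y => F y t) z (Vz z t) /\
     is_derive (fun y => Vz y t) z (Vzz z t) /\
     beta * Vt z t = Vzz z t + nu / z * Vz z t) :
  forall z t, 0 < z -> 0 < t ->
     exists vt vz vzz,
       is_derive (fun s => F z s) t vt /\
       is_derive (fun y => F y t) z vz /\
       is_derive (fun y => Derive (fun w => F w t) y) z vzz /\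
       beta * vt = vzz + nu / z * vz.
Proof.
  intros z t Hz Ht.
  destruct (H z t Hz Ht) as [H1 [H2 [H3 H4]]].
  exists (Vt z t), (Vz z t), (Vzz z t). split; [exact H1|split; [exact H2|split; [|exact H4]]].
  eapply is_derive_ext_loc; [|exact H3].
  apply (filter_imp (fun y => 0 < y)).
  - intros y Hy. symmetry. apply is_derive_unique. apply H; auto.
  - apply (open_gt 0 z Hz).
Qed.

Lemma part2_gen (nu beta : R) (K J Jinv : R -> R)
  (Kpos : forall x, 0 < K x)
  (HJ : forall x, is_derive J x (K x))
  (HJinv : forall x, Jinv (J x) = x)
  (F Vt Vz Vzz : R -> R -> R)
  (H : forall z t, 0 < z -> 0 < t ->
     is_derive (fun s => F z s) t (Vt z t) /\
     is_derive (fun y => F y t) z (Vz z t) /\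
     is_derive (fun y => Vz y t) z (Vzz z t) /\
     beta * Vt z t = Vzz z t + nu / z * Vz z t) :
  (forall z t, 0 < z -> 0 < t ->
     (exists w, J w = F z t) ->
     let u := fun y s => Jinv (F y s) in
     exists ut flux_z,
       is_derive (fun s => u z s) t ut /\
       ex_derive (fun y => u y t) z /\
       is_derive (fun y => K (u y t) * Rpower y nu * Derive (fun w => u w t) y) z flux_z /\
       (beta * K (u z t)) * ut = Rpower z (- nu) * flux_z).
Proof.
  intros z t Hz Ht [w Hw] u. unfold u.
  destruct (H z t Hz Ht) as [H1 [H2 [H3 H4]]].
  pose proof (Jinv_deriv K J Jinv Kpos HJ HJinv w) as Dw.
  rewrite Hw in Dw.
  pose proof (Kpos w) as Kw.
  exists (Vt z t * / K w).
  exists (nu * Rpower z (nu - 1) * Vz z t + Rpower z nu * Vzz z t).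
  split; [|split; [|split]].
  - apply (is_derive_comp Jinv (fun s => F z s)); auto.
  - eexists. apply (is_derive_comp Jinv (fun y => F y t)); eauto.
  - eapply is_derive_ext_loc;
      [|apply (is_derive_mult (fun y => Rpower y nu) (fun y => Vz y t)); auto].
    + pose proof (ex_derive_continuous (fun y => F y t) z (ex_intro _ _ H2)) as Hc.
      pose proof (J_incr K J Kpos HJ) as Hi.
      assert (Hl : J (w-1) < J w) by (apply Hi; lra).
      assert (Hr : J w < J (w+1)) by (apply Hi; lra).
      assert (Hloc : locally z (fun y => J (w-1) < F y t < J (w+1))).
      { assert (O : locally (F z t) (fun x => J (w-1) < x < J (w+1))).
        { apply (open_and _ _ (open_gt (J (w-1))) (open_lt (J (w+1)))).
          simpl. rewrite <- Hw. lra. }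
        exact (Hc _ O). }
      generalize (filter_and _ _ Hloc (open_gt 0 z Hz)).
      apply filter_imp. intros y [[Ha Hb] Hy].
      destruct (J_range K J Kpos HJ w (F y t)) as [x [_ Hx]]; [lra|].
      destruct (H y t Hy Ht) as [_ [G2 _]].
      pose proof (Jinv_deriv K J Jinv Kpos HJ HJinv x) as Dx.
      rewrite Hx in Dx.
      change (mult (Rpower y nu) (Vz y t)) with (Rpower y nu * Vz y t).
      replace (Derive (fun w0 : R => Jinv (F w0 t)) y) with (Vz y t * / K x).
      * rewrite <- Hx, HJinv. change (Rpower y nu * Vz y t = K x * Rpower y nu * (Vz y t * / K x)). field. pose proof (Kpos x). lra.
      * symmetry. apply is_derive_unique.
        apply (is_derive_comp Jinv (fun y => F y t)); auto.
      * apply is_derive_Reals. apply derivable_pt_lim_power; auto.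
      * intros; simpl; apply Rmult_comm.
  - rewrite <- Hw, HJinv.
    replace (nu - 1) with (nu + - (1)) by ring.
    rewrite Rpower_plus, !Rpower_Ropp, Rpower_1 by auto.
    assert (Pz : 0 < Rpower z nu) by apply exp_pos.
    transitivity (beta * Vt z t).
    + field. lra.
    + rewrite H4. field. split; lra.
Qed.

Definition P (nu t : R) := exp ((- (1 + nu) / 2) * ln t).
Definition E (beta z t : R) := exp (- (beta * z ^ 2) / (4 * t)).
Definition Q (nu z t : R) := exp ((1 - nu) * ln (z / t)).

Definition V2 beta nu c1 c2 z t :=
  exp ((- (1 + nu) / 2) * ln t) * exp (- (beta * z ^ 2) / (4 * t))
      * (c1 + c2 * (exp ((1 - nu) * ln (z / t)) / (1 - nu))).
Definition S2 nu c1 c2 z t := c1 + c2 * (exp ((1 - nu) * ln (z / t)) / (1 - nu)).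
Definition Vt2 beta nu c1 c2 z t :=
  P nu t * E beta z t * (((- (1 + nu) / 2) / t + beta * z^2 / (4 * t^2)) * S2 nu c1 c2 z t - c2 * Q nu z t / t).
Definition Vz2 beta nu c1 c2 z t :=
  P nu t * E beta z t * (- (beta * z) / (2 * t) * S2 nu c1 c2 z t + c2 * Q nu z t / z).
Definition Vzz2 beta nu c1 c2 z t :=
  P nu t * E beta z t * ((beta^2 * z^2 / (4 * t^2) - beta / (2 * t)) * S2 nu c1 c2 z t
     - beta * c2 * Q nu z t / t - nu * c2 * Q nu z t / z^2).

Lemma V2_der beta nu c1 c2 z t : 0 < z -> 0 < t -> nu <> 1 ->
     is_derive (fun s => V2 beta nu c1 c2 z s) t (Vt2 beta nu c1 c2 z t) /\
     is_derive (fun y => V2 beta nu c1 c2 y t) z (Vz2 beta nu c1 c2 z t) /\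
     is_derive (fun y => Vz2 beta nu c1 c2 y t) z (Vzz2 beta nu c1 c2 z t) /\
     beta * Vt2 beta nu c1 c2 z t = Vzz2 beta nu c1 c2 z t + nu / z * Vz2 beta nu c1 c2 z t.
Proof.
  intros Hz Ht Hnu.
  assert (H1 : 1 - nu <> 0) by lra.
  assert (Hzt : 0 < z / t) by (apply Rdiv_lt_0_compat; auto).
  unfold V2, Vt2, Vz2, Vzz2, S2, P, E, Q.
  split; [|split; [|split]].
  - auto_derive.
    + repeat split; auto; lra.
    + unfold Rdiv; cbn [pow]; field; repeat split; lra.
  - auto_derive.
    + repeat split; auto; lra.
    + unfold Rdiv; cbn [pow]; field; repeat split; lra.
  - auto_derive.
    + repeat split; auto; lra.
    + unfold Rdiv; cbn [pow]; field; repeat split; lra.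
  - field; repeat split; lra.
Qed.
Definition V1 beta c1 c2 z t :=
  / t * exp (- (beta * z ^ 2) / (4 * t)) * (c1 + c2 * ln (z / t)).
Definition S1 c1 c2 z t := c1 + c2 * ln (z / t).
Definition Vt1 beta c1 c2 z t :=
  E beta z t * ((- 1 / t^2 + beta * z^2 / (4 * t^3)) * S1 c1 c2 z t - c2 / t^2).
Definition Vz1 beta c1 c2 z t :=
  E beta z t / t * (- (beta * z) / (2 * t) * S1 c1 c2 z t + c2 / z).
Definition Vzz1 beta c1 c2 z t :=
  E beta z t / t * ((beta^2 * z^2 / (4 * t^2) - beta / (2 * t)) * S1 c1 c2 z t
     - beta * c2 / t - c2 / z^2).

Lemma V1_der beta c1 c2 z t : 0 < z -> 0 < t ->
     is_derive (fun s => V1 beta c1 c2 z s) t (Vt1 beta c1 c2 z t) /\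
     is_derive (fun y => V1 beta c1 c2 y t) z (Vz1 beta c1 c2 z t) /\
     is_derive (fun y => Vz1 beta c1 c2 y t) z (Vzz1 beta c1 c2 z t) /\
     beta * Vt1 beta c1 c2 z t = Vzz1 beta c1 c2 z t + 1 / z * Vz1 beta c1 c2 z t.
Proof.
  intros Hz Ht.
  assert (Hzt : 0 < z / t) by (apply Rdiv_lt_0_compat; auto).
  unfold V1, Vt1, Vz1, Vzz1, S1, E.
  split; [|split; [|split]].
  - auto_derive.
    + repeat split; auto; lra.
    + unfold Rdiv; cbn [pow]; field; repeat split; lra.
  - auto_derive.
    + repeat split; auto; lra.
    + unfold Rdiv; cbn [pow]; field; repeat split; lra.
  - auto_derive.
    + repeat split; auto; lra.
    + unfold Rdiv; cbn [pow]; field; repeat split; lra.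
  - unfold Rdiv; cbn [pow]; field; repeat split; lra.
Qed.

Lemma vsol_eq1 beta nu c1 c2 : nu = 1 -> vsol beta nu c1 c2 = V1 beta c1 c2.
Proof. intros e. unfold vsol. destruct (Req_EM_T nu 1); [reflexivity|contradiction]. Qed.

Lemma vsol_eq2 beta nu c1 c2 : nu <> 1 -> vsol beta nu c1 c2 = V2 beta nu c1 c2.
Proof. intros e. unfold vsol. destruct (Req_EM_T nu 1); [contradiction|reflexivity]. Qed.

Theorem mainTheorem9
  (nu beta c1 c2 : R) (K J Jinv : R -> R)
  (Hnu : 0 < nu)
  (Ksmooth : forall (n : nat) (x : R), ex_derive_n K n x)
  (Kpos : forall x, 0 < K x)
  (HJ : forall x, is_derive J x (K x))
  (HJinv : forall x, Jinv (J x) = x) :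
  (* v solves  beta v_t = v_zz + (nu/z) v_z  for z>0, t>0 *)
  (forall z t, 0 < z -> 0 < t ->
     exists vt vz vzz,
       is_derive (fun s => vsol beta nu c1 c2 z s) t vt /\
       is_derive (fun y => vsol beta nu c1 c2 y t) z vz /\
       is_derive (fun y => Derive (fun w => vsol beta nu c1 c2 w t) y) z vzz /\
       beta * vt = vzz + nu / z * vz)
  /\
  (* u = J^{-1}(v) solves  C(u) u_t = z^{-nu} (K(u) z^nu u_z)_z, C = beta K,
     wherever v takes values in the range of J *)
  (forall z t, 0 < z -> 0 < t ->
     (exists w, J w = vsol beta nu c1 c2 z t) ->
     let u := fun y s => Jinv (vsol beta nu c1 c2 y s) in
     exists ut flux_z,
       is_derive (fun s => u z s) t ut /\
       ex_derive (fun y => u y t) z /\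
       is_derive (fun y => K (u y t) * Rpower y nu * Derive (fun w => u w t) y) z flux_z /\
       (beta * K (u z t)) * ut = Rpower z (- nu) * flux_z).
Proof.
  destruct (Req_EM_T nu 1) as [e|n].
  - rewrite (vsol_eq1 beta nu c1 c2 e).
    assert (H : forall z t, 0 < z -> 0 < t ->
     is_derive (fun s => V1 beta c1 c2 z s) t (Vt1 beta c1 c2 z t) /\
     is_derive (fun y => V1 beta c1 c2 y t) z (Vz1 beta c1 c2 z t) /\
     is_derive (fun y => Vz1 beta c1 c2 y t) z (Vzz1 beta c1 c2 z t) /\
     beta * Vt1 beta c1 c2 z t = Vzz1 beta c1 c2 z t + nu / z * Vz1 beta c1 c2 z t).
    { intros z t Hz Ht. subst nu. apply V1_der; auto. }
    split.
    + exact (part1_gen beta nu _ _ _ _ H).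
    + exact (part2_gen nu beta K J Jinv Kpos HJ HJinv _ _ _ _ H).
  - rewrite (vsol_eq2 beta nu c1 c2 n).
    assert (H : forall z t, 0 < z -> 0 < t ->
     is_derive (fun s => V2 beta nu c1 c2 z s) t (Vt2 beta nu c1 c2 z t) /\
     is_derive (fun y => V2 beta nu c1 c2 y t) z (Vz2 beta nu c1 c2 z t) /\
     is_derive (fun y => Vz2 beta nu c1 c2 y t) z (Vzz2 beta nu c1 c2 z t) /\
     beta * Vt2 beta nu c1 c2 z t = Vzz2 beta nu c1 c2 z t + nu / z * Vz2 beta nu c1 c2 z t).
    { intros z t Hz Ht. apply V2_der; auto. }
    split.
    + exact (part1_gen beta nu _ _ _ _ H).
    + exact (part2_gen nu beta K J Jinv Kpos HJ HJinv _ _ _ _ H).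
Qed.
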